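(* Let $\mathcal{A}=\langle Q,\Sigma,\delta\rangle$ be a semisimple synchronizing automaton with $n=|Q|$ states and former-rank $r=\mathrm{Fr}(\mathcal{A})\ge 2$. Then $\mathcal{A}$ has a reset word of length at most $(n-1)D(2,r,n)$. In particular, $\mathcal{A}$ has a reset word of length at most $\dfrac{n(n-1)^2}{r(r-1)}$.
   Context: An automaton $\mathcal{A}=\langle Q,\Sigma,\delta\rangle$ has finite state set $Q=\{q_1,\dots,q_n\}$, finite alphabet $\Sigma$ and transition function $\delta:Q\times\Sigma\to Q$; write $q\cdot u$ for the action of a word $u\in\Sigma^*$, extended to subsets of $Q$. A word $u$ is reset (synchronizing) if $|Q\cdot u|=1$; $\mathrm{Syn}(\mathcal{A})$ denotes the set of reset words, and $\mathcal{A}$ is synchronizing if $\mathrm{Syn}(\mathcal{A})\neq\emptyset$. Each word $u$ acts linearly on $\mathbb{C}Q$ (basis $Q$) by $q\mapsto q\cdot u$; this action preserves $w^\perp=\{x\in\mathbb{C}Q:\langle x,w\rangle=0\}$, where $w=q_1+\dots+q_n$, and $u$ is reset iff it acts as $0$ on $w^\perp$. Let $\rho:\Sigma^*\to \mathrm{End}(w^\perp)\cong\mathbb{M}_{n-1}(\mathbb{C})$ be the induced representation ($\rho(uv)=\rho(u)\rho(v)$), and let $\mathcal{R}$ be the $\mathbb{C}$-subalgebra of $\mathbb{M}_{n-1}(\mathbb{C})$ generated by $\rho(\Sigma^* )$, with Jacobson radical $\mathrm{Rad}(\mathcal{R})$. The set of radical words is $\mathrm{Rad}(\mathcal{A})=\rho^{-1}(\mathrm{Rad}(\mathcal{R}))\supseteq\mathrm{Syn}(\mathcal{A})$.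 A synchronizing automaton is semisimple if $\mathrm{Rad}(\mathcal{A})=\mathrm{Syn}(\mathcal{A})$ (equivalently $\mathrm{Rad}(\mathcal{R})\cap\rho(\Sigma^* )=\{0\}$). The former-rank is $\mathrm{Fr}(\mathcal{A})=\min\{|Q\cdot u|: u\in\Sigma^*\setminus\mathrm{Syn}(\mathcal{A})\}$. For integers $t,r\le n$, the packing number $D(t,r,n)$ is the maximum size of a family of $r$-element subsets of $[1,n]$ such that no $t$-element subset is contained in more than one member of the family. *)

(* Defs.v *)
From HB Require Import structures.
From mathcomp Require Import all_boot all_order all_algebra.
From mathcomp Require Import algC.

Set Implicit Arguments.
Unset Strict Implicit.
Unset Printing Implicit Defensive.

Import GRing.Theory Num.Theory.

Section Automaton.
Variables (n : nat) (Sigma : finType) (delta : 'I_n -> Sigma -> 'I_n).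

Definition act (q : 'I_n) (u : seq Sigma) : 'I_n := foldl delta q u.

Definition img (u : seq Sigma) : {set 'I_n} := [set act q u | q : 'I_n].

Definition is_reset (u : seq Sigma) : bool := #|img u| == 1%N.

Definition synchronizing : Prop := exists u, is_reset u.

(* Linear action of u on CQ, as a matrix acting on row vectors:
   the basis vector q is sent to q . u.  rho (u ++ v) = rho u *m rho v. *)
Definition rho (u : seq Sigma) : 'M[algC]_n :=
  \matrix_(i, j) ((act i u == j)%:R : algC)%R.

(* A matrix whose row space is w^perp = { x | <x, w> = 0 }, w = q_1 + ... + q_n. *)
Definition Wperp : 'M[algC]_n := kermx (const_mx 1%R : 'M[algC]_(n, 1)).

(* Two endomorphisms of CQ (stabilizing w^perp) induce the same endomorphism
   of w^perp. *)
Definition eqW (A B : 'M[algC]_n) : Prop := (Wperp *m A = Wperp *m B)%R.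

(* A represents an element of the subalgebra R generated by rho(Sigma^* ):
   since rho(Sigma^* ) is a monoid containing the identity, R is its linear span. *)
Definition inR (A : 'M[algC]_n) : Prop :=
  exists s : seq (algC * seq Sigma), (A = \sum_(p <- s) p.1 *: rho p.2)%R.

(* X (restricted to w^perp) is a unit of the algebra R. *)
Definition unitR (X : 'M[algC]_n) : Prop :=
  exists B, inR B /\ eqW (B *m X)%R (1%:M)%R /\ eqW (X *m B)%R (1%:M)%R.

(* X (restricted to w^perp) lies in the Jacobson radical Rad(R):
   1 - a x is a unit of R for every a in R. *)
Definition inRad (X : 'M[algC]_n) : Prop :=
  inR X /\ forall A, inR A -> unitR (1%:M - A *m X)%R.

Definition radical_word (u : seq Sigma) : Prop := inRad (rho u).

(* semisimple synchronizing automaton: Rad(A) = Syn(A)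
   (Syn(A) is always contained in Rad(A)). *)
Definition semisimple : Prop :=
  synchronizing /\ forall u, radical_word u -> is_reset u.

Definition is_former_rank (r : nat) : Prop :=
  (exists u, ~~ is_reset u /\ #|img u| = r) /\
  (forall u, ~~ is_reset u -> r <= #|img u|)%N.

End Automaton.

Definition packing (t r : nat) (n : nat) (F : {set {set 'I_n}}) : bool :=
  [forall B in F, #|B| == r] &&
  [forall T : {set 'I_n}, (#|T| == t) ==> (#|[set B in F | T \subset B]| <= 1)%N].

Definition D (t r n : nat) : nat :=
  \max_(F : {set {set 'I_n}} | packing t r F) #|F|.

(* Main.v *)
Require Import Defs.
From mathcomp Require Import all_boot all_order all_algebra.
From mathcomp Require Import algC.
From mathcomp Require Import zify.
From Stdlib Require Import Classical.
Set Implicit Arguments. Unset Strict Implicit. Unset Printing Implicit Defensive.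
Import GRing.Theory Num.Theory.

Section S.
Variables (n : nat) (Sigma : finType) (delta : 'I_n -> Sigma -> 'I_n).
Local Notation act := (act delta).
Local Notation img := (img delta).
Local Notation is_reset := (is_reset delta).
Local Notation rho := (rho delta).
Implicit Types (S T : {set 'I_n}) (u v w a b : seq Sigma).

Definition imgS (S : {set 'I_n}) (w : seq Sigma) := [set act q w | q in S].

Lemma act_cat q u v : act q (u ++ v) = act (act q u) v.
Proof. by rewrite /Defs.act foldl_cat. Qed.

Lemma imgS_cat S u v : imgS S (u ++ v) = imgS (imgS S u) v.
Proof.
apply/setP=> x; apply/imsetP/imsetP => [[q qS ->]|[y /imsetP[q qS ->] ->]].
  by exists (act q u); [apply: imset_f | rewrite act_cat].
by exists q => //; rewrite act_cat.
Qed.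

Lemma img_imgS u : img u = imgS setT u.
Proof. by apply/setP=> x; rewrite /Defs.img /imgS; apply/imsetP/imsetP=> [[q _ ->]|[q _ ->]]; exists q. Qed.

Lemma img_cat u v : img (u ++ v) = imgS (img u) v.
Proof. by rewrite !img_imgS imgS_cat. Qed.

Lemma imgS_sub S T u : S \subset T -> imgS S u \subset imgS T u.
Proof. by move=> ST; apply: imsetS. Qed.

Lemma img_catl u v : img (u ++ v) \subset img v.
Proof. by rewrite img_cat (img_imgS v) imgS_sub // subsetT. Qed.

Lemma card_imgS S u : #|imgS S u| <= #|S|.
Proof. exact: leq_imset_card. Qed.

Lemma n_pos : (exists u, is_reset u) -> 0 < n.
Proof.
case=> u; rewrite /Defs.is_reset; case: n delta u => // d u.
by rewrite /Defs.img; rewrite (_ : [set _ | _ : 'I_0] = set0) ?cards0 //; apply/setP=> -[].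
Qed.

Lemma img_gt0 u : 0 < n -> 0 < #|img u|.
Proof.
case: n delta u => // m d u _; rewrite card_gt0; apply/set0Pn.
by exists (Defs.act d ord0 u); apply: imset_f.
Qed.

Lemma reset_le1 u : 0 < n -> is_reset u = (#|img u| <= 1).
Proof. move=> n0; rewrite /Defs.is_reset eqn_leq (img_gt0 u n0) andbT.
done. Qed.

Lemma reset_ext a u b : 0 < n -> is_reset u -> is_reset (a ++ u ++ b).
Proof.
move=> n0; rewrite !reset_le1 // => h.
rewrite catA img_cat; apply: leq_trans (card_imgS _ _) _.
exact: leq_trans (subset_leq_card (img_catl _ _)) h.
Qed.

Local Open Scope ring_scope.
Local Notation W := (Wperp n).


Lemma rho_cat u v : rho (u ++ v) = rho u *m rho v.
Proof.
apply/matrixP=> i j; rewrite !mxE (bigD1 (act i u)) //= mxE eqxx mul1r.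
rewrite big1 ?addr0; first by rewrite mxE act_cat.
by move=> k; rewrite mxE eq_sym => /negbTE ->; rewrite mul0r.
Qed.

Lemma rho_nil : rho [::] = 1%:M.
Proof. by apply/matrixP=> i j; rewrite !mxE. Qed.

Lemma Wperp_reset w : (0 < n)%N -> is_reset w -> W *m rho w = 0.
Proof.
move=> n0 /cards1P [s hs].
have hact : forall k, act k w = s.
  by move=> k; apply/set1P; rewrite -hs /Defs.img; apply: imset_f.
have -> : rho w = const_mx 1 *m delta_mx (ord0 : 'I_1) s.
  by apply/matrixP=> i j; rewrite !mxE big_ord1 !mxE hact mul1r eq_sym.
by rewrite /Wperp mulmxA mulmx_ker mul0mx.
Qed.

Definition lc (s : seq (algC * seq Sigma)) : 'M[algC]_n := \sum_(p <- s) p.1 *: rho p.2.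

Lemma lc_mulr s u : lc s *m rho u = lc [seq (p.1, p.2 ++ u) | p <- s].
Proof.
rewrite /lc big_map mulmx_suml; apply: eq_bigr => p _.
by rewrite -scalemxAl rho_cat.
Qed.

Lemma lc_mull s u : rho u *m lc s = lc [seq (p.1, u ++ p.2) | p <- s].
Proof.
rewrite /lc big_map mulmx_sumr; apply: eq_bigr => p _.
by rewrite -scalemxAr rho_cat.
Qed.

Lemma lc_mulB s (B : 'M[algC]_n) : lc s *m B = \sum_(p <- s) p.1 *: (rho p.2 *m B).
Proof. by rewrite /lc mulmx_suml; apply: eq_bigr => p _; rewrite scalemxAl. Qed.

Lemma Wperp_lc_reset s : (0 < n)%N -> (forall p, p \in s -> is_reset p.2) -> W *m lc s = 0.
Proof.
move=> n0 h; rewrite /lc mulmx_sumr big_seq big1 // => p ps.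
by rewrite -scalemxAr Wperp_reset ?scaler0 // h.
Qed.

Lemma radical_of u : (0 < n)%N -> (forall v, is_reset (u ++ v ++ u)) -> radical_word delta u.
Proof.
move=> n0 h; split.
  by exists [:: (1, u)]; rewrite big_seq1 scale1r.
move=> A [s ->].
set X := lc s *m rho u.
have hX : W *m (X *m X) = 0.
  rewrite /X lc_mulr; set s' := [seq _ | _ <- s].
  rewrite [lc s' *m _]lc_mulB mulmx_sumr big_seq big1 // => p /mapP [p' _ ->] /=.
  rewrite -scalemxAr lc_mull Wperp_lc_reset ?scaler0 // => q /mapP [q'' /mapP [q' _ ->] ->] /=.
  by have := reset_ext p'.2 [::] n0 (h q'.2); rewrite -!catA cats0.
exists (1%:M + X); split; last split.
- exists ((1, [::]) :: [seq (p.1, p.2 ++ u) | p <- s]).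
  by rewrite big_cons scale1r rho_nil /X lc_mulr.
- rewrite /eqW mulmxDl mul1mx (mulmxBr X) mulmx1 addrA subrK (mulmxBr W) hX.
  by rewrite subr0.
- rewrite /eqW mulmxBl mul1mx (mulmxDr X) mulmx1 opprD addrA addrK (mulmxBr W) hX.
  by rewrite subr0.
Qed.

Local Close Scope ring_scope.

Lemma ex_min (A : Type) (P : A -> Prop) (f : A -> nat) :
  (exists x, P x) -> exists x, P x /\ forall y, P y -> f x <= f y.
Proof.
move=> [x Px]; move: {2}(f x) (leqnn (f x)) => k; elim: k x Px => [|k IH] x Px hfx.
  by exists x; split => // y _; move: hfx; rewrite leqn0 => /eqP ->.
case: (classic (exists y, P y /\ f y < f x)) => [[y [Py lt]]|H].
  by apply: (IH y Py); rewrite -ltnS; apply: leq_trans lt hfx.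
exists x; split => // y Py; rewrite leqNgt; apply/negP => lt; apply: H; by exists y.
Qed.

Definition crit S := forall w, #|imgS S w| = #|S| \/ #|imgS S w| <= 1.

Lemma crit_sub S T : crit S -> T \subset S -> crit T.
Proof.
move=> cS TS w; case: (cS w) => h; last first.
  by right; apply: leq_trans (subset_leq_card (imgS_sub w TS)) h.
left; apply: card_in_imset => a b aT bT.
have /imset_injP inj : #|imgS S w| == #|S| by rewrite h.
by apply: inj; apply: (subsetP TS).
Qed.

Lemma crit_img S u : crit S -> #|imgS S u| = #|S| -> crit (imgS S u).
Proof.
move=> cS h w; rewrite -imgS_cat h; case: (cS (u ++ w)) => [->|]; by [left|right].
Qed.


Lemma pack_bound Z r g : crit Z -> #|Z| = r -> 1 < r -> is_reset g ->
  exists w, #|imgS Z w| <= 1 /\ size w <= D 2 r n.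
Proof.
move=> cZ hZ r1 hg.
have ex : exists w, #|imgS Z w| <= 1.
  exists g; move: hg; rewrite /Defs.is_reset => /eqP h1; rewrite -h1 img_imgS.
  by apply: subset_leq_card; apply: imgS_sub; apply: subsetT.
have [w [hw wmin]] := ex_min size ex.
set L := size w in wmin *.
have hcard : forall i, i < L -> #|imgS Z (take i w)| = r.
  move=> i iL; case: (cZ (take i w)) => [->//|h].
  by have := wmin _ h; rewrite size_take iL leqNgt iL.
have hcritS : forall i, i < L -> crit (imgS Z (take i w)).
  by move=> i iL; apply: crit_img => //; rewrite hcard // hZ.
have key : forall i j, i < j -> j < L ->
    #|imgS Z (take i w) :&: imgS Z (take j w)| <= 1.
  move=> i j ij jL; rewrite leqNgt; apply/negP => /card_gt1P [a [b [ha hb ab]]].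
  move: ha hb; rewrite !inE => /andP [ai aj] /andP [bi bj].
  set w2 := drop j w.
  have e : act a w2 = act b w2.
    have: #|imgS (imgS Z (take j w)) w2| <= 1 by rewrite -imgS_cat cat_take_drop.
    by move/card_le1_eqP; apply; apply: imset_f.
  have : #|imgS (imgS Z (take i w)) w2| <= 1.
    case: (hcritS i (ltn_trans ij jL) w2) => // h.
    have /imset_injP inj : #|imgS (imgS Z (take i w)) w2| == #|imgS Z (take i w)| by rewrite h.
    by move: ab; rewrite (inj a b ai bi e) eqxx.
  rewrite -imgS_cat => /wmin; rewrite size_cat size_take (ltn_trans ij jL) size_drop -/L => h.
  lia.
have hne : forall i j, i < L -> j < L -> i != j ->
    #|imgS Z (take i w) :&: imgS Z (take j w)| <= 1.
  move=> i j iL jL; case: (ltngtP i j) => // ij _; first exact: key.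
  by rewrite setIC; apply: key.
pose F := [set imgS Z (take (val i) w) | i : 'I_L].
have cardF : #|F| = L.
  rewrite card_imset ?card_ord // => i j e; apply/val_inj/eqP; apply: contraT => ne.
  have := hne i j (ltn_ord i) (ltn_ord j) ne.
  by rewrite e setIid hcard ?ltn_ord // leqNgt r1.
have packF : packing 2 r F.
  rewrite /packing; apply/andP; split.
    by apply/forallP => B; apply/implyP => /imsetP [i _ ->]; rewrite hcard ?ltn_ord.
  apply/forallP => T; apply/implyP => /eqP T2; rewrite leqNgt; apply/negP.
  move=> /card_gt1P [B1 [B2 [h1 h2 ne]]].
  move: h1 h2; rewrite !inE => /andP [/imsetP [i _ e1] Ti] /andP [/imsetP [j _ e2] Tj].
  subst B1 B2.
  have ij : val i != val j by apply: contraNneq ne => /val_inj ->.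
  have h2 := hne i j (ltn_ord i) (ltn_ord j) ij.
  have : T \subset imgS Z (take i w) :&: imgS Z (take j w) by rewrite subsetI Ti Tj.
  by move/subset_leq_card; rewrite T2 => h1; have := leq_trans h1 h2.
exists w; split => //; rewrite -/L -cardF /D.
apply: (@leq_bigmax_cond _ (fun F => packing 2 r F) (fun F => #|F|) F packF).
Qed.


Lemma semisimple_sq y : semisimple delta -> ~~ is_reset y ->
  exists v, ~~ is_reset (y ++ v ++ y).
Proof.
move=> [[g hg] ss] ny; have n0 := n_pos (ex_intro _ g hg).
case: (classic (exists v, ~~ is_reset (y ++ v ++ y))) => // H; exfalso.
move/negP: ny; apply; apply: ss; apply: radical_of => // v.
case: (boolP (is_reset (y ++ v ++ y))) => // hv; case: H; by exists v.
Qed.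

Lemma step x r : semisimple delta -> is_former_rank delta r -> 1 < r -> ~~ is_reset x ->
  exists w, size w <= D 2 r n /\ #|img (x ++ w)| < #|img x|.
Proof.
move=> hss hfr r1 nx; have [g hg] := hss.1; have n0 := n_pos (ex_intro _ g hg).
have ex0 : exists p : seq Sigma * seq Sigma, ~~ is_reset (p.1 ++ x ++ p.2).
  by exists ([::], [::]); rewrite /= cats0.
have [[s t] [/= ny ymin]] := @ex_min _ (fun p : seq Sigma * seq Sigma => ~~ is_reset (p.1 ++ x ++ p.2))
  (fun p => #|img (p.1 ++ x ++ p.2)|) ex0.
have [v hv] := semisimple_sq hss ny.
set z := (s ++ x ++ t ++ v ++ s) ++ x.
have zsub : img z \subset img x by rewrite /z img_catl.
have zy : #|img z| <= #|img (s ++ x ++ t)|.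
  by rewrite (_ : z = (s ++ x ++ t) ++ (v ++ s ++ x)) ?img_cat ?card_imgS // /z -!catA.
have nz : ~~ is_reset z.
  apply: contra hv => hz; have := reset_ext [::] t n0 hz.
  by rewrite /= /z -!catA.
have critz : crit (img z).
  move=> w; rewrite -img_cat; case: (boolP (is_reset (z ++ w))) => hzw.
    by right; rewrite -reset_le1.
  left; apply/eqP; rewrite eqn_leq img_cat card_imgS /=.
  apply: leq_trans zy _; rewrite -img_cat.
  have := ymin ((s ++ x ++ t ++ v ++ s), w); rewrite /= (_ : (s ++ x ++ t ++ v ++ s) ++ x ++ w = z ++ w).
    by apply.
  by rewrite /z -!catA.
have rz : r <= #|img z| := hfr.2 z nz.
have /card_geqP [sq [uq szq subq]] := rz.
pose Z := [set q in sq].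
have cZ : #|Z| = r by rewrite cardsE (card_uniqP uq).
have ZS : Z \subset img z by apply/subsetP => q; rewrite inE; apply: subq.
have [w [hw sw]] := pack_bound (crit_sub critz ZS) cZ r1 hg.
exists w; split => //.
rewrite img_cat ltn_neqAle card_imgS andbT; apply/negP => /imset_injP inj.
have : #|imgS Z w| = #|Z|.
  apply: card_in_imset => a b aZ bZ; apply: inj; apply: (subsetP zsub); exact: (subsetP ZS).
by rewrite cZ => h; move: hw; rewrite h leqNgt r1.
Qed.

Lemma greedy r k x : semisimple delta -> is_former_rank delta r -> 1 < r ->
  #|img x| <= k.+1 -> exists u, is_reset (x ++ u) /\ size u <= k * D 2 r n.
Proof.
move=> hss hfr r1; have [g hg] := hss.1; have n0 := n_pos (ex_intro _ g hg).
elim: k x => [|k IH] x hx.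
  by exists [::]; rewrite cats0 reset_le1.
case: (boolP (is_reset x)) => rx.
  by exists [::]; rewrite cats0.
have [w [sw lt]] := step hss hfr r1 rx.
have [u [hu su]] := IH (x ++ w) (leq_trans lt hx).
exists (w ++ u); split; first by rewrite catA.
by rewrite size_cat mulSn leq_add.
Qed.

End S.

Lemma sum_bool (T : finType) (P : pred T) : \sum_(x : T) (P x : nat) = #|P|.
Proof. by rewrite -sum1_card [RHS]big_mkcond; apply: eq_bigr => x _; rewrite unfold_in; case: (P x). Qed.

Lemma johnson_sets n r (F : {set {set 'I_n}}) :
  packing 2 r F -> #|F| * (r * (r - 1)) <= n * (n - 1).
Proof.
move=> /andP [/forallP hr /forallP hT].
pose g (B : {set 'I_n}) (a b : 'I_n) : nat := (a \in B) && (b \in B :\ a).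
have E1 : forall B, B \in F -> \sum_a \sum_b g B a b = r * (r - 1).
  move=> B BF; have cB : #|B| = r by apply/eqP; have := hr B; rewrite BF.
  transitivity (\sum_(a : 'I_n) ((a \in B) * (r - 1))).
    apply: eq_bigr => a _.
    rewrite /g; under eq_bigr do rewrite -mulnb.
    rewrite -big_distrr /= sum_bool.
    case aB: (a \in B) => //=.
    have := cardsD1 a B; rewrite aB cB add1n => ->.
    by rewrite subn1 /= mul1n.
  rewrite -big_distrl /= -cB; congr (_ * _).
  by rewrite sum_bool.
rewrite -sum_nat_const (eq_bigr (fun B => \sum_a \sum_b g B a b)); last first.
  by move=> B BF; rewrite E1.
apply: (@leq_trans (\sum_(a : 'I_n) \sum_(b : 'I_n) (b != a : nat))).
  rewrite exchange_big; apply: leq_sum => a _; rewrite exchange_big; apply: leq_sum => b _.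
  case: (eqVneq b a) => [->|ba].
    by rewrite big1 // => B _; rewrite /g in_setD1 eqxx andbF.
  have ab : a != b by rewrite eq_sym.
  have := hT [set a; b]; rewrite cards2 ab /= => h.
  apply: leq_trans h; rewrite -sum1dep_card big_mkcond [X in _ <= X]big_mkcond /=.
  apply: leq_sum => B _; rewrite /g in_setD1 ba subUset !sub1set.
  by case: (B \in F); case: (a \in B); case: (b \in B).
rewrite (eq_bigr (fun _ => n - 1)); last first.
  move=> a _; rewrite (eq_bigr (fun b => (predC1 a b : nat))) // sum_bool cardC1 card_ord.
  by rewrite subn1.
by rewrite big_const_ord iter_addn_0 mulnC.
Qed.

Lemma johnson r n : 1 < r -> D 2 r n * (r * (r - 1)) <= n * (n - 1).
Proof.
move=> r1; have k0 : 0 < r * (r - 1) by rewrite muln_gt0; apply/andP; split; lia.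
apply: leq_trans (leq_trunc_div _ (r * (r - 1))).
rewrite leq_mul2r; apply/orP; right.
rewrite /D; apply/bigmax_leqP => F pF; rewrite leq_divRL //; exact: johnson_sets.
Qed.

Theorem mainTheorem1 (n : nat) (Sigma : finType) (delta : 'I_n -> Sigma -> 'I_n)
    (r : nat) :
  semisimple delta -> is_former_rank delta r -> (2 <= r)%N ->
  exists u : seq Sigma,
    [/\ is_reset delta u,
        (size u <= (n - 1) * D 2 r n)%N &
        ((size u)%:R <= ((n * (n - 1) ^ 2)%N)%:R / ((r * (r - 1))%N)%:R :> rat)%R].
Proof.
move=> hss hfr r2; have [g hg] := hss.1; have n0 := n_pos (ex_intro _ g hg).
have hx : #|img delta [::]| <= n.-1.+1.
  by rewrite prednK //; apply: leq_trans (max_card _) _; rewrite card_ord.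
have [u [hu su]] := greedy hss hfr r2 hx.
have su' : (size u <= (n - 1) * D 2 r n)%N by rewrite subn1.
exists u; split => //.
have k0 : (0 < r * (r - 1))%N by rewrite muln_gt0; apply/andP; split; lia.
rewrite ler_pdivlMr ?ltr0n // -natrM ler_nat.
apply: leq_trans (leq_mul su' (leqnn _)) _.
rewrite -mulnA; apply: leq_trans (leq_mul (leqnn _) (johnson _ r2)) _.
by rewrite mulnCA expnS expn1.
Qed.
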